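(* Let $m\ge 2$, $d_1,\dots,d_m\ge 2$, and let $\rho$ be a density matrix on $\mathbb{C}^{d_1}\otimes\cdots\otimes\mathbb{C}^{d_m}$. For each $i=1,\dots,m$ let $\mathcal{P}^{(i)}=\{P^{(i)}_j\}_{j=1}^{d_i^2}$ be a general SIC-POVM on $\mathbb{C}^{d_i}$ with parameter $a_i$. Let $d=\min\{d_1^2,\dots,d_m^2\}$ and define $$J(\rho)=\max_{\sigma_1,\dots,\sigma_m}\sum_{j=1}^{d}\mathrm{Tr}\Big[\Big(\bigotimes_{i=1}^m P^{(i)}_{\sigma_i(j)}\Big)\rho\Big],$$ where the maximum runs over all tuples of injective maps $\sigma_i:\{1,\dots,d\}\to\{1,\dots,d_i^2\}$, $i=1,\dots,m$. If $\rho$ is fully separable, then $$J(\rho)\le \frac1m\sum_{i=1}^m\frac{a_id_i^2+1}{d_i(d_i+1)}.$$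
   Context: A general SIC-POVM on $\mathbb{C}^{n}$ with parameter $a$ is a set of $n^2$ positive semidefinite operators $\{P_\alpha\}_{\alpha=1}^{n^2}$ on $\mathbb{C}^{n}$ such that $\sum_{\alpha=1}^{n^2}P_\alpha=I$, $\mathrm{Tr}(P_\alpha^2)=a$ for all $\alpha$, and $\mathrm{Tr}(P_\alpha P_\beta)=\frac{1-na}{n(n^2-1)}$ for all $\alpha\neq\beta$; here $\frac{1}{n^3}<a\le\frac{1}{n^2}$. A density matrix on $\mathbb{C}^{d_1}\otimes\cdots\otimes\mathbb{C}^{d_m}$ is fully separable if it is a convex combination of product states $\rho_1\otimes\cdots\otimes\rho_m$. *)

(* Defs.v *)
(* The complex field is modelled by an arbitrary
   numClosedFieldType C (e.g. algC); operators on a finite-dimensional Hilbert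
   space with orthonormal basis indexed by a finType T are functions T -> T -> C. *)
From HB Require Import structures.
From mathcomp Require Import all_boot all_order all_algebra all_field.
Set Implicit Arguments. Unset Strict Implicit. Unset Printing Implicit Defensive.
Import Order.TTheory GRing.Theory Num.Theory.
Local Open Scope ring_scope.

Definition op (C : numClosedFieldType) (T : finType) := T -> T -> C.

Definition tr (C : numClosedFieldType) (T : finType) (A : op C T) : C := \sum_(x : T) A x x.

Definition mulop (C : numClosedFieldType) (T : finType) (A B : op C T) : op C T :=
  fun x y => \sum_(z : T) A x z * B z y.

Definition psd (C : numClosedFieldType) (T : finType) (A : op C T) : Prop :=
  forall v : T -> C, 0 <= \sum_(x : T) \sum_(y : T) (v x)^* * A x y * v y.

Definition density (C : numClosedFieldType) (T : finType) (A : op C T) : Prop := psd A /\ tr A = 1.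

Definition gen_sic (C : numClosedFieldType) (n : nat) (a : C) (P : 'I_(n ^ 2) -> op C 'I_n) : Prop :=
  [/\ forall al, psd (P al),
      forall x y : 'I_n, \sum_(al < n ^ 2) P al x y = (x == y)%:R,
      forall al, tr (mulop (P al) (P al)) = a,
      forall al be, al != be ->
        tr (mulop (P al) (P be)) = (1 - n%:R * a) / (n%:R * ((n ^ 2)%N%:R - 1)) &
      ((n ^ 3)%N%:R)^-1 < a /\ a <= ((n ^ 2)%N%:R)^-1].

(* index type of the multipartite space C^{d_0} (x) ... (x) C^{d_{m-1}} *)
Definition mindex (m : nat) (d : 'I_m -> nat) : finType :=
  {dffun forall i : 'I_m, 'I_(d i)}.

Definition tensor (C : numClosedFieldType) (m : nat) (d : 'I_m -> nat) (A : forall i : 'I_m, op C 'I_(d i))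
  : op C (mindex d) :=
  fun x y => \prod_(i < m) A i (x i) (y i).

Definition fully_separable (C : numClosedFieldType) (m : nat) (d : 'I_m -> nat) (rho : op C (mindex d)) : Prop :=
  exists (K : nat) (p : 'I_K -> C) (r : 'I_K -> forall i : 'I_m, op C 'I_(d i)),
    [/\ forall k, 0 <= p k,
        \sum_(k < K) p k = 1,
        forall k i, density (r k i) &
        forall x y, rho x y = \sum_(k < K) p k * tensor (r k) x y].

(* d = min_i d_i^2  (the initial value \max_i d_i^2 makes this the minimum for m >= 1) *)
Definition dmin (m : nat) (d : 'I_m -> nat) : nat :=
  \big[minn/(\max_(i < m) (d i ^ 2))%N]_(i < m) (d i ^ 2)%N.

(* Main.v *)
Require Import Defs.
From HB Require Import structures.
From mathcomp Require Import all_boot all_order all_algebra all_field ring zify.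
Set Implicit Arguments. Unset Strict Implicit. Unset Printing Implicit Defensive.
Import Order.TTheory GRing.Theory Num.Theory.
Local Open Scope ring_scope.
Local Open Scope sesquilinear_scope.
Lemma sum_mindex (R : comRingType) (m : nat) (d : 'I_m -> nat)
  (f : forall i : 'I_m, 'I_(d i) -> R) :
  \sum_(x : mindex d) \prod_(i < m) f i (x i) = \prod_(i < m) \sum_(y : 'I_(d i)) f i y.
Proof.
pose P_ := fun i : 'I_m => [ffun y : 'I_(d i) => f i y].
rewrite (reindex (@dffun_of_fprod _ (fun i => 'I_(d i)))); last first.
  by apply/onW_bij/dffun_of_fprod_bij.
transitivity (\sum_(t : fprod (fun i => 'I_(d i))) \prod_(i in 'I_m) P_ i (t i)).
  by apply: eq_bigr => t _; apply: eq_bigr => i _; rewrite /P_ !ffunE.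
rewrite big_fprod.
rewrite -[LHS](bigA_distr_big_dep _ (fun i j => untag 0 (P_ i) j)).
apply: eq_bigr => i _.
rewrite -(big_tag (fun i => fun_of_fin (P_ i))) /=.
by apply: eq_bigr => y _; rewrite /P_ ffunE.
Qed.

Lemma herm_decomp (C : numClosedFieldType) n (A : 'I_n -> 'I_n -> C) :
  (forall x y, A y x = (A x y)^*) ->
  exists (D : 'I_n -> C) (U : 'I_n -> 'I_n -> C),
  [/\ forall x y, A x y = \sum_k (U k x)^* * D k * U k y,
      forall k l, \sum_y U k y * (U l y)^* = (k == l)%:R &
      forall x y, \sum_k (U k x)^* * U k y = (x == y)%:R ].
Proof.
move=> HA.
pose M := \matrix_(i, j) A i j.
have HM : M \is hermsymmx.
  apply/is_hermitianmxP; apply/matrixP => i j; rewrite !mxE /=.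
  by rewrite expr0 mul1r -HA.
have /orthomx_spectralP E := hermitian_normalmx HM.
set U := spectralmx M in E; set Dg := spectral_diag M in E.
have Uu : U \is unitarymx by exact: spectral_unitarymx.
rewrite invmx_unitary // in E.
have UUt := unitarymxP Uu.
have UtU : U^t* *m U = 1%:M by rewrite -invmx_unitary // mulVmx // unitarymx_unit.
exists (fun k => Dg 0 k), (fun k y => U k y); split.
- move=> x y; have /matrixP/(_ x y) := E; rewrite mxE => ->.
  rewrite mxE; apply: eq_bigr => k _; rewrite mul_mx_diag !mxE //.
- move=> k l; have /matrixP/(_ k l) := UUt; rewrite !mxE => <-.
  by apply: eq_bigr => y _; rewrite !mxE.
- move=> x y; have /matrixP/(_ x y) := UtU; rewrite !mxE => <-.
  by apply: eq_bigr => k _; rewrite !mxE.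
Qed.
Section Q.
Variable C : numClosedFieldType.

Definition qf (T : finType) (A : op C T) (v : T -> C) :=
  \sum_(x : T) \sum_(y : T) (v x)^* * A x y * v y.

Lemma sumdelta (T : finType) (F : T -> C) x : \sum_w F w * (w == x)%:R = F x.
Proof.
rewrite (bigD1 x) //= eqxx mulr1 big1 ?addr0 // => w /negbTE ->; by rewrite mulr0.
Qed.

Lemma sumdelta' (T : finType) (F : T -> C) x : \sum_w (w == x)%:R * F w = F x.
Proof. by rewrite -[RHS](sumdelta F x); apply: eq_bigr => w _; rewrite mulrC. Qed.

Lemma sumdelta_s (T : finType) (F : T -> C) c x : \sum_w F w * (c * (w == x)%:R) = c * F x.
Proof.
rewrite -(sumdelta (fun w => c * F w)); apply: eq_bigr => w _.
by rewrite !mulrA [F w * c]mulrC.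
Qed.

Lemma qf2 (T : finType) (A : op C T) x y al be :
  qf A (fun u => al * (u == x)%:R + be * (u == y)%:R) =
  al^* * (al * A x x + be * A x y) + be^* * (al * A y x + be * A y y).
Proof.
rewrite /qf.
transitivity (\sum_u (al^* * (u == x)%:R + be^* * (u == y)%:R) * (al * A u x + be * A u y)).
  apply: eq_bigr => u _.
  under eq_bigr do rewrite -mulrA.
  rewrite rmorphD /= !rmorphM /= !conjC_nat -big_distrr /=; congr (_ * _).
  under eq_bigr do rewrite mulrDr.
  by rewrite big_split /= !sumdelta_s.
rewrite (eq_bigr (fun u => al^* * ((u == x)%:R * (al * A u x + be * A u y)) +
                           be^* * ((u == y)%:R * (al * A u x + be * A u y)))); last first.
  by move=> u _; rewrite mulrDl !mulrA.
rewrite big_split /= -!big_distrr /= !sumdelta' //.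
Qed.

Lemma psd_diag (T : finType) (A : op C T) x : psd A -> 0 <= A x x.
Proof.
move=> HA; have : 0 <= qf A (fun u => 1 * (u == x)%:R + 0 * (u == x)%:R) := HA _.
by rewrite qf2 rmorph1 rmorph0 !mul0r !mul1r !addr0.
Qed.

Lemma psd_herm (T : finType) (A : op C T) x y : psd A -> A y x = (A x y)^*.
Proof.
move=> HA.
have q1 : 0 <= qf A (fun u => 1 * (u == x)%:R + 1 * (u == y)%:R) := HA _.
have q2 : 0 <= qf A (fun u => 1 * (u == x)%:R + 'i * (u == y)%:R) := HA _.
move: q1 q2 => /geC0_conj q1 /geC0_conj q2.
rewrite qf2 in q1; rewrite qf2 in q2.
have cx := geC0_conj (psd_diag x HA); have cy := geC0_conj (psd_diag y HA).
move: q1 q2; rewrite !rmorph1 !mul1r conjCi !rmorphD !rmorphM /= conjCi cx cy.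
set u := A x y; set w := A y x; set u' := u^*; set w' := w^*.
move=> h1 h2.
rewrite !(rmorphN, rmorphD, rmorphM) /= conjCi opprK cy -/w' in h2.
move/eqP: h1; rewrite -subr_eq0 => /eqP h1.
move/eqP: h2; rewrite -subr_eq0 => /eqP h2.
have e : (w - u') * (2 * 'i) =
   (A x x + - 'i * u' + 'i * (w' + - 'i * A y y) - (A x x + 'i * u + - 'i * (w + 'i * A y y)))
   - 'i * (A x x + u' + (w' + A y y) - (A x x + u + (w + A y y))) by ring.
rewrite h1 h2 mulr0 subr0 in e.
apply/eqP; rewrite -subr_eq0; apply/eqP.
move/eqP: e; rewrite mulf_eq0 mulf_eq0 (negbTE (neq0Ci C)) pnatr_eq0 orbF /=.
by rewrite orbF => /eqP.
Qed.

Lemma prod_sums (I J : finType) c (a : I -> C) (b : J -> C) :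
  c * ((\sum_i a i) * (\sum_j b j)) = \sum_i \sum_j c * (a i * b j).
Proof.
rewrite big_distrl big_distrr /=; apply: eq_bigr => i _.
rewrite big_distrr big_distrr /=; apply: eq_bigr => j _ //.
Qed.

Lemma psd_decomp n (A : op C 'I_n) : psd A ->
  exists (D : 'I_n -> C) (U : 'I_n -> 'I_n -> C),
  [/\ forall x y, A x y = \sum_k (U k x)^* * D k * U k y,
      forall k l, \sum_y U k y * (U l y)^* = (k == l)%:R,
      forall x y, \sum_k (U k x)^* * U k y = (x == y)%:R &
      forall k, qf A (fun y => (U k y)^*) = D k].
Proof.
move=> HA; have [D [U [EA ON CO]]] := herm_decomp (fun x y => psd_herm x y HA).
exists D, U; split => // k.
rewrite /qf.
transitivity (\sum_x \sum_y \sum_j (U k x * (U j x)^* * D j * U j y * (U k y)^*)).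
  apply: eq_bigr => x _; apply: eq_bigr => y _.
  rewrite EA conjCK big_distrr big_distrl /=; apply: eq_bigr => j _; ring.
rewrite exchange_big /=.
under eq_bigr do rewrite exchange_big /=.
rewrite exchange_big /=.
transitivity (\sum_j D j * ((\sum_y U j y * (U k y)^*) * (\sum_x U k x * (U j x)^*))).
  apply: eq_bigr => j _; rewrite prod_sums; apply: eq_bigr => y _.
  apply: eq_bigr => x _; ring.
under eq_bigr do rewrite ON ON.
rewrite (bigD1 k) //= eqxx mulr1 mulr1 big1 ?addr0 // => j /negbTE.
by rewrite eq_sym => ->; rewrite !(mulr0, mul0r).
Qed.

Lemma tr_mul_decomp n (A B : op C 'I_n) (D : 'I_n -> C) (U : 'I_n -> 'I_n -> C) :
  (forall x y, A x y = \sum_k (U k x)^* * D k * U k y) ->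
  tr (mulop A B) = \sum_k D k * qf B (fun y => (U k y)^*).
Proof.
move=> EA; rewrite /tr /mulop /qf.
transitivity (\sum_x \sum_z \sum_k D k * ((U k z) * B z x * (U k x)^*)).
  apply: eq_bigr => x _; apply: eq_bigr => z _.
  rewrite EA big_distrl /=; apply: eq_bigr => k _; ring.
rewrite exchange_big /=.
under eq_bigr do rewrite exchange_big /=.
rewrite exchange_big /=; apply: eq_bigr => k _.
rewrite big_distrr /=; apply: eq_bigr => z _.
rewrite big_distrr /=; apply: eq_bigr => x _; rewrite conjCK; ring.
Qed.

Lemma tr_psd n (A B : op C 'I_n) : psd A -> psd B -> 0 <= tr (mulop A B).
Proof.
move=> HA HB; have [D [U [EA ON CO QD]]] := psd_decomp HA.
rewrite (tr_mul_decomp B EA); apply: sumr_ge0 => k _; apply: mulr_ge0 => //.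
by rewrite -QD; apply: HA.
exact: HB.
Qed.

Lemma density_sq n (r : op C 'I_n) : density r -> tr (mulop r r) <= 1.
Proof.
move=> [Hr tr1]; have [D [U [EA ON CO QD]]] := psd_decomp Hr.
have D0 k : 0 <= D k by rewrite -QD; apply: Hr.
have trD : \sum_k D k = 1.
  rewrite -tr1 /tr.
  transitivity (\sum_k \sum_x (U k x)^* * D k * U k x).
    apply: eq_bigr => k _.
    have Ok : \sum_y U k y * (U k y)^* = 1 by rewrite ON eqxx.
    rewrite -[LHS]mulr1 -Ok big_distrr /=.
    by apply: eq_bigr => y _; ring.
  by rewrite exchange_big /=; apply: eq_bigr => x _; rewrite EA.
have D1 k : D k <= 1.
  rewrite -trD (bigD1 k) //= lerDl; exact: sumr_ge0.
rewrite (tr_mul_decomp r EA) -trD; apply: ler_sum => k _; rewrite QD.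
by rewrite -[X in _ <= X]mulr1; apply: ler_wpM2l.
Qed.

Definition ip (T : finType) (A B : op C T) : C := tr (mulop A B).
Definition idop (T : finType) : op C T := fun x z => (x == z)%:R.

Lemma ipE (T : finType) (A B : op C T) : ip A B = \sum_x \sum_z A x z * B z x.
Proof. by []. Qed.

Lemma ip_sym (T : finType) (A B : op C T) : ip A B = ip B A.
Proof.
rewrite !ipE exchange_big /=; apply: eq_bigr => x _; apply: eq_bigr => z _.
exact: mulrC.
Qed.

Lemma ip_lin1 (T : finType) (V W U X : op C T) c e :
  ip (fun x z => V x z - c * W x z - e * U x z) X = ip V X - c * ip W X - e * ip U X.
Proof.
rewrite !ipE !big_distrr -!sumrB /=; apply: eq_bigr => x _.
rewrite !big_distrr -!sumrB /=; apply: eq_bigr => z _; ring.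
Qed.

Lemma ip_lin2 (T : finType) (V W U X : op C T) c e :
  ip X (fun x z => V x z - c * W x z - e * U x z) = ip X V - c * ip X W - e * ip X U.
Proof. by rewrite ip_sym ip_lin1 ![ip _ X]ip_sym. Qed.

Lemma ip_suml (T J : finType) (t : J -> C) (Q : J -> op C T) X :
  ip (fun x z => \sum_j t j * Q j x z) X = \sum_j t j * ip (Q j) X.
Proof.
rewrite ipE.
transitivity (\sum_x \sum_z \sum_j t j * (Q j x z * X z x)).
  apply: eq_bigr => x _; apply: eq_bigr => z _; rewrite big_distrl /=.
  by apply: eq_bigr => j _; rewrite mulrA.
rewrite exchange_big /=; under eq_bigr do rewrite exchange_big /=.
rewrite exchange_big /=; apply: eq_bigr => j _; rewrite ipE big_distrr /=.
rewrite [LHS]exchange_big /=; apply: eq_bigr => x _; by rewrite big_distrr.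
Qed.

Lemma ip_idr (T : finType) (X : op C T) : ip X (@idop T) = tr X.
Proof.
rewrite ipE /tr; apply: eq_bigr => x _; rewrite /idop.
by rewrite -[RHS](sumdelta (X x) x); apply: eq_bigr => z _; rewrite eq_sym.
Qed.

Lemma ip_idl (T : finType) (X : op C T) : ip (@idop T) X = tr X.
Proof. by rewrite ip_sym ip_idr. Qed.

Lemma tr_id n : tr (@idop 'I_n) = n%:R.
Proof.
rewrite /tr /idop (eq_bigr (fun _ => 1)) => [|x _]; last by rewrite eqxx.
by rewrite sumr_const card_ord.
Qed.

Lemma ip_herm_ge0 (T : finType) (Z : op C T) :
  (forall x z, Z z x = (Z x z)^*) -> 0 <= ip Z Z.
Proof.
move=> HZ; rewrite ipE; apply: sumr_ge0 => x _; apply: sumr_ge0 => z _.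
rewrite (HZ x z); exact: mul_conjC_ge0.
Qed.

Section SIC.
Variables (n : nat) (a : C) (P : 'I_(n ^ 2) -> op C 'I_n) (r : op C 'I_n).
Hypotheses (n2 : (2 <= n)%N) (HP : gen_sic a P) (Hr : density r).

Let nn : C := n%:R.
Let b : C := (1 - nn * a) / (nn * ((n ^ 2)%N%:R - 1)).

Let nn0 : nn != 0. Proof. by rewrite /nn pnatr_eq0; case: n n2. Qed.
Let nn1 : nn + 1 != 0. Proof. by rewrite /nn natr1 pnatr_eq0. Qed.
Let nsq1 : (n ^ 2)%N%:R - 1 != 0 :> C.
Proof.
rewrite subr_eq0 -[X in _ != X](mulr1n 1) eqr_nat.
apply/negP => /eqP E.
have : (1 < n ^ 2)%N by nia.
by rewrite E.
Qed.

Lemma Gsum (s : 'I_(n ^ 2) -> C) al :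
  \sum_be s be * ip (P al) (P be) = (a - b) * s al + b * \sum_be s be.
Proof.
case: HP => _ _ Hsq Hoff _.
rewrite (bigD1 al) //= [X in _ = _ + b * X](bigD1 al) //=.
rewrite /ip Hsq.
rewrite (eq_bigr (fun be => s be * b)); last first.
  by move=> be Hbe; rewrite Hoff // eq_sym.
rewrite -big_distrl /=; ring.
Qed.

Lemma trP al : tr (P al) = nn^-1.
Proof.
case: HP => _ Hsum _ _ _.
rewrite -ip_idr.
transitivity (ip (P al) (fun x z => \sum_be 1 * P be x z)).
  rewrite !ipE; apply: eq_bigr => x _; apply: eq_bigr => z _.
  by rewrite /idop -Hsum; congr (_ * _); apply: eq_bigr => be _; rewrite mul1r.
rewrite ip_sym ip_suml; under eq_bigr do rewrite ip_sym.
have h := nsq1; rewrite natrX -/nn in h.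
rewrite Gsum sumr_const card_ord /b natrX -/nn.
by field; rewrite nn0 h.
Qed.
Lemma sic_bound :
  \sum_al (tr (mulop (P al) r)) ^+ 2 <= (a * (n ^ 2)%N%:R + 1) / (nn * (nn + 1)).
Proof.
have [Hpsd Hsum Hsq Hoff [Ha1 Ha2]] := HP.
have [Hrp Hr1] := Hr.
set t := fun al => tr (mulop (P al) r).
have t0 al : 0 <= t al by apply: tr_psd.
have tR al : (t al)^* = t al by apply: geC0_conj.
have tsum : \sum_al t al = 1.
  transitivity (ip (fun x z => \sum_be 1 * P be x z) r).
    by rewrite ip_suml; apply: eq_bigr => be _; rewrite mul1r.
  rewrite -[RHS]Hr1 -ip_idl !ipE; apply: eq_bigr => x _; apply: eq_bigr => z _.
  by rewrite /idop /= -Hsum; congr (_ * _); apply: eq_bigr => be _; rewrite mul1r.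
set S := \sum_al t al ^+ 2.
pose Y : op C 'I_n := fun x z => \sum_al t al * P al x z.
have YP be : ip Y (P be) = (a - b) * t be + b.
  rewrite ip_suml; under eq_bigr do rewrite ip_sym.
  by rewrite Gsum tsum mulr1.
have Yr : ip Y r = S.
  by rewrite ip_suml; apply: eq_bigr => al _; rewrite expr2.
have YY : ip Y Y = (a - b) * S + b.
  rewrite {1}/Y ip_suml; under eq_bigr do rewrite ip_sym YP.
  rewrite (eq_bigr (fun al => (a - b) * t al ^+ 2 + b * t al)); last first.
    by move=> al _; rewrite expr2; ring.
  by rewrite big_split /= -!big_distrr /= tsum mulr1.
have YI : ip Y (@idop _) = nn^-1.
  rewrite ip_suml; under eq_bigr do rewrite ip_idr trP.
  by rewrite -big_distrl /= tsum mul1r.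
have rI : ip r (@idop _) = 1 by rewrite ip_idr.
have II : ip (@idop 'I_n) (@idop _) = nn by rewrite ip_idr tr_id.
have rr1 : ip r r <= 1 by apply: density_sq.
set rr := ip r r in rr1.
pose c := a - b.
pose e := nn^-1 / nn - c / nn.
have hn : (n ^ 2)%N%:R - 1 = nn ^+ 2 - 1 :> C by rewrite natrX.
have hn3 : ((n ^ 3)%N%:R)^-1 = (nn ^+ 3)^-1 :> C by rewrite natrX.
have c0 : 0 < c.
  have -> : c = (a - (nn ^+ 3)^-1) * (nn ^+ 3 / (nn * (nn ^+ 2 - 1))).
    rewrite /c /b hn; field.
    have h := nsq1; rewrite hn in h; by rewrite nn0 h.
  rewrite mulr_gt0 // ?subr_gt0 -?hn3 //.
  rewrite divr_gt0 ?exprn_gt0 ?mulr_gt0 ?subr_gt0 ?ltr0n //; try by case: n n2.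
  rewrite -natrX ltr1n; nia.
have cR : c^* = c by apply: geC0_conj; apply: ltW.
have eR : e^* = e.
  apply: conj_Creal; rewrite /e rpredB ?rpredM ?rpredV ?realn //.
  by apply: gtr0_real.
pose Z : op C 'I_n := fun x z => Y x z - c * r x z - e * idop x z.
have ZH x z : Z z x = (Z x z)^*.
  rewrite /Z !rmorphB !rmorphM /= cR eR /idop conjC_nat eq_sym.
  rewrite (psd_herm x z Hrp); congr (_ - _ - _).
  rewrite /Y rmorph_sum; apply: eq_bigr => al _.
  by rewrite (psd_herm x z (Hpsd al)) -[in LHS]tR -rmorphM.
have N0 := ip_herm_ge0 ZH.
rewrite /Z ip_lin1 !ip_lin2 in N0.
rewrite [ip r Y]ip_sym [ip (@idop _) Y]ip_sym [ip (@idop _) r]ip_sym Yr YY YI rI II -/rr in N0.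
set N := (X in 0 <= X) in N0.
have key : (a * (n ^ 2)%N%:R + 1) / (nn * (nn + 1)) - S = (N + c ^+ 2 * (1 - rr)) / c.
  rewrite /N /e /c /b hn natrX -/nn.
  field.
  have h := nsq1; rewrite hn in h.
  have hc : a * (nn * (nn ^+ 2 - 1)) - (1 - nn * a) != 0.
    have -> : a * (nn * (nn ^+ 2 - 1)) - (1 - nn * a) = c * (nn * (nn ^+ 2 - 1)).
      rewrite /c /b hn; field; by rewrite h nn0.
    by rewrite !mulf_neq0 // gt_eqF.
  move: h hc nn0 nn1; rewrite /nn => -> -> -> ->; done.
rewrite -subr_ge0 key; apply: divr_ge0; last exact: ltW.
apply: addr_ge0 => //; apply: mulr_ge0; first exact: exprn_ge0 (ltW c0).
by rewrite subr_ge0.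
Qed.
End SIC.

Lemma prod_le_sq (m : nat) (u : 'I_m -> C) : (2 <= m)%N ->
  (forall i, 0 <= u i) -> (forall i, u i <= 1) ->
  \prod_i u i <= m%:R^-1 * \sum_i u i ^+ 2.
Proof.
move=> m2 u0 u1.
have AGM := @leif_AGM C 'I_m predT (fun i => u i ^+ 2) (fun i _ => exprn_ge0 2 (u0 i)).
case: AGM => /= AGM _.
have cm : #|pred_of_simpl (@predT 'I_m)| = m := card_ord m.
rewrite cm in AGM.
have e1 : \prod_(i in pred_of_simpl predT) u i ^+ 2 = \prod_i u i ^+ 2 := erefl.
have e2 : \sum_(i in pred_of_simpl predT) u i ^+ 2 = \sum_i u i ^+ 2 := erefl.
rewrite e1 e2 prodrXl in AGM.
set mu := (\sum_i u i ^+ 2) / m%:R in AGM.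
have m0 : 0 < m%:R :> C by rewrite ltr0n; apply: leq_trans m2.
have mu0 : 0 <= mu by rewrite divr_ge0 ?sumr_ge0 ?ltW // => i _; apply: exprn_ge0.
have mu1 : mu <= 1.
  rewrite ler_pdivrMr // mul1r.
  have -> : m%:R = \sum_(i < m) (1 : C) by rewrite sumr_const card_ord.
  apply: ler_sum => i _; exact: exprn_ile1.
have mum : mu ^+ m <= mu ^+ 2.
  rewrite -(subnK m2) exprD -[X in _ <= X]mul1r ler_wpM2r ?exprn_ge0 //.
  exact: exprn_ile1.
have P0 : 0 <= \prod_i u i by apply: prodr_ge0.
have : (\prod_i u i) ^+ 2 <= mu ^+ 2 by apply: le_trans mum.
rewrite ler_pXn2r // ?nnegrE // mulrC //.
Qed.

Lemma povm_tsum n N (P : 'I_N -> op C 'I_n) (r : op C 'I_n) :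
  (forall x y, \sum_al P al x y = (x == y)%:R) -> density r ->
  \sum_al tr (mulop (P al) r) = 1.
Proof.
move=> Hsum [_ Hr1].
transitivity (ip (fun x z => \sum_be 1 * P be x z) r).
  by rewrite ip_suml; apply: eq_bigr => be _; rewrite mul1r.
rewrite -[RHS]Hr1 -ip_idl !ipE; apply: eq_bigr => x _; apply: eq_bigr => z _.
by rewrite /idop /= -Hsum; congr (_ * _); apply: eq_bigr => be _; rewrite mul1r.
Qed.

Lemma sub_sum (D N : nat) (s : 'I_D -> 'I_N) (f : 'I_N -> C) :
  injective s -> (forall al, 0 <= f al) -> \sum_j f (s j) <= \sum_al f al.
Proof.
move=> si f0.
have -> : \sum_j f (s j) = \sum_(al in [set s j | j in 'I_D]) f al.
  by rewrite big_imset //= => x y _ _; apply: si.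
rewrite [X in _ <= X](bigID (fun al => al \in [set s j | j in 'I_D])) /=.
by rewrite lerDl sumr_ge0.
Qed.

Lemma tr_tensor (m : nat) (d : 'I_m -> nat) (A R : forall i : 'I_m, op C 'I_(d i)) :
  tr (mulop (tensor A) (tensor R)) = \prod_i tr (mulop (A i) (R i)).
Proof.
rewrite /tr /mulop /tensor.
transitivity (\sum_(x : mindex d) \prod_i \sum_(y : 'I_(d i)) A i (x i) y * R i y (x i)).
  apply: eq_bigr => x _; rewrite -sum_mindex; apply: eq_bigr => z _.
  by rewrite -big_split.
by rewrite (sum_mindex (fun i u => \sum_(y : 'I_(d i)) A i u y * R i y u)).
Qed.
End Q.

Theorem theorem3 (C : numClosedFieldType) (m : nat) (d : 'I_m -> nat) (rho : op C (mindex d))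
  (a : 'I_m -> C) (P : forall i : 'I_m, 'I_(d i ^ 2) -> op C 'I_(d i)) :
  (2 <= m)%N ->
  (forall i, (2 <= d i)%N) ->
  density rho ->
  (forall i, gen_sic (a i) (P i)) ->
  fully_separable rho ->
  forall sigma : forall i : 'I_m, 'I_(dmin d) -> 'I_(d i ^ 2),
    (forall i, injective (sigma i)) ->
    \sum_(j < dmin d) tr (mulop (tensor (fun i => P i (sigma i j))) rho)
      <= m%:R^-1 * \sum_(i < m) (a i * (d i ^ 2)%N%:R + 1) / ((d i)%:R * ((d i)%:R + 1)).
Proof.
move=> m2 d2 _ Hsic [K [p [rr [p0 p1 rd Hrho]]]] sigma sinj.
set B := fun i : 'I_m => (a i * (d i ^ 2)%N%:R + 1) / ((d i)%:R * ((d i)%:R + 1)).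
have step1 j : tr (mulop (tensor (fun i => P i (sigma i j))) rho) =
    \sum_k p k * \prod_i tr (mulop (P i (sigma i j)) (rr k i)).
  transitivity (ip (tensor (fun i => P i (sigma i j)))
                   (fun x y => \sum_k p k * tensor (rr k) x y)).
    by rewrite !ipE; apply: eq_bigr => x _; apply: eq_bigr => z _; rewrite Hrho.
  rewrite ip_sym ip_suml; apply: eq_bigr => k _.
  by rewrite ip_sym /ip tr_tensor.
rewrite (eq_bigr _ (fun j _ => step1 j)) exchange_big /=.
apply: (@le_trans _ _ (\sum_k p k * (m%:R^-1 * \sum_i B i))); last first.
  by rewrite -big_distrl /= p1 mul1r.
apply: ler_sum => k _; rewrite -big_distrr /=; apply: ler_wpM2l; first exact: p0.
pose t i al := tr (mulop (P i al) (rr k i)).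
have t0 i al : 0 <= t i al.
  by apply: tr_psd; [case: (Hsic i) | case: (rd k i)].
have tsum i : \sum_al t i al = 1.
  by apply: povm_tsum; [case: (Hsic i) | exact: rd].
have t1 i al : t i al <= 1.
  by rewrite -(tsum i) (bigD1 al) //= lerDl sumr_ge0.
apply: (@le_trans _ _ (\sum_j m%:R^-1 * \sum_i t i (sigma i j) ^+ 2)).
  apply: ler_sum => j _; exact: (@prod_le_sq _ m (fun i => t i (sigma i j)) m2 (fun i => t0 i _) (fun i => t1 i _)).
rewrite -big_distrr /= exchange_big /=; apply: ler_wpM2l.
  by rewrite invr_ge0 ler0n.
apply: ler_sum => i _.
apply: (le_trans (@sub_sum _ _ _ (sigma i) (fun al => t i al ^+ 2) (sinj i) (fun al => exprn_ge0 2 (t0 i al)))).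
exact: (sic_bound (d2 i) (Hsic i) (rd k i)).
Qed.
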